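(* Let $J$ be a cone with joins. Then: (a) $(x+y)\wedge z\le x\wedge z+y\wedge z$ for all $x,y,z\in J$; (b) if $x+y=z+w$ then $x+y=x\vee z+y\wedge w$; in particular $x+y=x\vee y+x\wedge y$ for all $x,y\in J$; (c) for every family $(x_i)\subset J$ and $y\in J$: $\sup_i(x_i\wedge y)\le(\sup_ix_i)\wedge y\le\sup_i(x_i\wedge y)+\varepsilon(y\vee\sup_ix_i)$; (d) if $v_1+v_2=w_1+w_2$ then there are $z_{ij}\in J$, $i,j=1,2$, with $z_{11}+z_{12}=v_1$, $z_{21}+z_{22}=v_2+\varepsilon v_1$, $z_{11}+z_{21}=w_1$, $z_{12}+z_{22}=w_2+\varepsilon w_1$; (e) if $v_1+v_2=w_1+w_2$ then there are $z_{ij}\in J$, $i,j=1,2$, with $z_{11}+z_{12}=v_1$, $z_{21}+z_{22}=v_2$, $z_{11}+z_{21}+\varepsilon w_2\ge w_1$, $z_{12}+z_{22}+\varepsilon w_1\ge w_2$.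
   Context: A prewedge is a set $W$ with a commutative associative addition with neutral element $0$ and a multiplication $[0,\infty)\times W\to W$ such that $\lambda(\eta v)=(\lambda\eta)v$, $0v=0$, $1v=v$, $(\lambda+\eta)v=\lambda v+\eta v$, $\lambda(v+w)=\lambda v+\lambda w$; it carries the preorder $v\le w$ iff $v+z=w$ for some $z$. A wedge is a prewedge in which $\le$ is antisymmetric and $v=\sup_{\eta<1}\eta v$ for every $v$. A cone is a wedge in which every directed subset (a subset in which every finite subset, including the empty one, has an upper bound in the subset) has a supremum. A cone with joins is a cone $J$ in which every subset $A$ has an infimum and $\inf(v+A)=v+\inf A$ for all $v\in J$, $A\subset J$, where $v+A=\{v+a:a\in A\}$; it is a complete lattice, and $\vee,\wedge$ denote the supremum and infimum of two elements. For $v$ in a cone, $\varepsilon v:=\inf\{\lambda v:\lambda>0\}$ (the part at infinity of $v$). *)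

(* Defs.v *)
From Stdlib Require Import Reals List ClassicalEpsilon.
Open Scope R_scope.

(* Operations of a prewedge: addition, zero, and scalar multiplication.
   Scalar multiplication is a total map R -> W -> W, but all axioms and all
   uses only concern scalars lambda in [0, +oo). *)
Record cone_ops (W : Type) := ConeOps {
  cadd : W -> W -> W;
  czero : W;
  csmul : R -> W -> W
}.
Arguments cadd {W} _ _ _.
Arguments czero {W} _.
Arguments csmul {W} _ _ _.

Section ConeDefs.
Context {W : Type} (o : cone_ops W).

Local Notation "x + y" := (cadd o x y).
Local Notation "l * x" := (csmul o l x).

Definition is_prewedge : Prop :=
  (forall x y, x + y = y + x) /\
  (forall x y z, x + (y + z) = (x + y) + z) /\
  (forall x, x + czero o = x) /\
  (forall l e v, 0 <= l -> 0 <= e -> l * (e * v) = (l * e)%R * v) /\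
  (forall v, 0 * v = czero o) /\
  (forall v, 1 * v = v) /\
  (forall l e v, 0 <= l -> 0 <= e -> (l + e)%R * v = l * v + e * v) /\
  (forall l v w, 0 <= l -> l * (v + w) = l * v + l * w).

Definition cle (v w : W) : Prop := exists z, v + z = w.

Definition is_ub (A : W -> Prop) (s : W) : Prop := forall a, A a -> cle a s.
Definition is_lb (A : W -> Prop) (s : W) : Prop := forall a, A a -> cle s a.
Definition is_sup (A : W -> Prop) (s : W) : Prop :=
  is_ub A s /\ forall u, is_ub A u -> cle s u.
Definition is_inf (A : W -> Prop) (s : W) : Prop :=
  is_lb A s /\ forall u, is_lb A u -> cle u s.

Definition is_wedge : Prop :=
  is_prewedge /\
  (forall v w, cle v w -> cle w v -> v = w) /\
  (forall v, is_sup (fun u => exists e, 0 <= e < 1 /\ u = e * v) v).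

(* directed: every finite subset (including the empty one) has an upper
   bound in the subset *)
Definition directed (A : W -> Prop) : Prop :=
  forall l : list W, (forall x, In x l -> A x) ->
    exists u, A u /\ forall x, In x l -> cle x u.

Definition is_cone : Prop :=
  is_wedge /\ forall A, directed A -> exists s, is_sup A s.

Definition is_cone_with_joins : Prop :=
  is_cone /\
  (forall A, exists i, is_inf A i) /\
  (forall v A i, is_inf A i ->
     is_inf (fun u => exists a, A a /\ u = v + a) (v + i)).

(* chosen infimum / supremum (unique whenever they exist, by antisymmetry) *)
Definition cinf (A : W -> Prop) : W := epsilon (inhabits (czero o)) (is_inf A).
Definition csup (A : W -> Prop) : W := epsilon (inhabits (czero o)) (is_sup A).

Definition cmeet (x y : W) : W := cinf (fun u => u = x \/ u = y).
Definition cjoin (x y : W) : W := csup (fun u => u = x \/ u = y).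

Definition csupf {I : Type} (x : I -> W) : W := csup (fun u => exists i, u = x i).

Definition ceps (v : W) : W := cinf (fun u => exists l, 0 < l /\ u = l * v).

End ConeDefs.

(* Main.v *)
Require Import Defs.
From Stdlib Require Import Reals.
From Stdlib Require Import List ClassicalEpsilon Classical Lra.
Open Scope R_scope.

Ltac unpack HJ := destruct HJ as [[[[Hc [Ha [H0 [Hsa [Hs0 [Hs1 [Hsdl Hsdr]]]]]]] [Hanti Hwed]] Hdir] [Hinf Hdist]].



Lemma addC {W} (o : cone_ops W) (HJ : is_cone_with_joins o) x y : cadd o x y = cadd o y x.
Proof. unpack HJ. apply Hc. Qed.
Lemma addA {W} (o : cone_ops W) (HJ : is_cone_with_joins o) x y z : cadd o x (cadd o y z) = cadd o (cadd o x y) z.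
Proof. unpack HJ. apply Ha. Qed.
Lemma add0 {W} (o : cone_ops W) (HJ : is_cone_with_joins o) x : cadd o x (czero o) = x.
Proof. unpack HJ. apply H0. Qed.
Lemma add0l {W} (o : cone_ops W) (HJ : is_cone_with_joins o) x : cadd o (czero o) x = x.
Proof. rewrite (addC o HJ). apply (add0 o HJ). Qed.
Lemma smulA {W} (o : cone_ops W) (HJ : is_cone_with_joins o) l e v : 0 <= l -> 0 <= e ->
  csmul o l (csmul o e v) = csmul o (l * e) v.
Proof. unpack HJ. apply Hsa. Qed.
Lemma smul0 {W} (o : cone_ops W) (HJ : is_cone_with_joins o) v : csmul o 0 v = czero o.
Proof. unpack HJ. apply Hs0. Qed.
Lemma smul1 {W} (o : cone_ops W) (HJ : is_cone_with_joins o) v : csmul o 1 v = v.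
Proof. unpack HJ. apply Hs1. Qed.
Lemma smulDl {W} (o : cone_ops W) (HJ : is_cone_with_joins o) l e v : 0 <= l -> 0 <= e ->
  csmul o (l + e) v = cadd o (csmul o l v) (csmul o e v).
Proof. unpack HJ. apply Hsdl. Qed.
Lemma smulDr {W} (o : cone_ops W) (HJ : is_cone_with_joins o) l v w : 0 <= l ->
  csmul o l (cadd o v w) = cadd o (csmul o l v) (csmul o l w).
Proof. unpack HJ. apply Hsdr. Qed.
Lemma anti {W} (o : cone_ops W) (HJ : is_cone_with_joins o) v w : cle o v w -> cle o w v -> v = w.
Proof. unpack HJ. apply Hanti. Qed.
Lemma wedge {W} (o : cone_ops W) (HJ : is_cone_with_joins o) v :
  is_sup o (fun u => exists e, 0 <= e < 1 /\ u = csmul o e v) v.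
Proof. unpack HJ. apply Hwed. Qed.
Lemma dist {W} (o : cone_ops W) (HJ : is_cone_with_joins o) v A i : is_inf o A i ->
     is_inf o (fun u => exists a, A a /\ u = cadd o v a) (cadd o v i).
Proof. unpack HJ. apply Hdist. Qed.

Lemma cinf_spec {W} (o : cone_ops W) (HJ : is_cone_with_joins o) A : is_inf o A (cinf o A).
Proof. unfold cinf. apply epsilon_spec. unpack HJ. apply Hinf. Qed.

Lemma csup_spec {W} (o : cone_ops W) (HJ : is_cone_with_joins o) A : is_sup o A (csup o A).
Proof. unfold csup. apply epsilon_spec.
  destruct (cinf_spec o HJ (is_ub o A)) as [Hl Hg].
  exists (cinf o (is_ub o A)). split.
  - intros a Ha. apply Hg. intros u Hu. apply Hu, Ha.
  - intros u Hu. apply Hl, Hu.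
Qed.

Lemma cle_refl {W} (o : cone_ops W) (HJ : is_cone_with_joins o) v : cle o v v.
Proof. exists (czero o). apply (add0 o HJ). Qed.
Lemma cle_trans {W} (o : cone_ops W) (HJ : is_cone_with_joins o) u v w : cle o u v -> cle o v w -> cle o u w.
Proof. intros [a <-] [b <-]. exists (cadd o a b). apply (addA o HJ). Qed.
Lemma cle_add {W} (o : cone_ops W) (HJ : is_cone_with_joins o) a b c d : cle o a b -> cle o c d ->
  cle o (cadd o a c) (cadd o b d).
Proof. intros [x <-] [y <-]. exists (cadd o x y).
  rewrite !(addA o HJ). f_equal. rewrite <- !(addA o HJ). f_equal. apply (addC o HJ). Qed.
Lemma cle_0 {W} (o : cone_ops W) (HJ : is_cone_with_joins o) v : cle o (czero o) v.
Proof. exists v. apply (add0l o HJ). Qed.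
Lemma cle_addr {W} (o : cone_ops W) (HJ : is_cone_with_joins o) a b : cle o a (cadd o a b).
Proof. exists b. reflexivity. Qed.
Lemma cle_addl {W} (o : cone_ops W) (HJ : is_cone_with_joins o) a b : cle o a (cadd o b a).
Proof. exists b. apply (addC o HJ). Qed.
Lemma cle_addR {W} (o : cone_ops W) (HJ : is_cone_with_joins o) a b c : cle o a b -> cle o (cadd o a c) (cadd o b c).
Proof. intro H. apply (cle_add o HJ); auto. apply (cle_refl o HJ). Qed.
Lemma cle_addL {W} (o : cone_ops W) (HJ : is_cone_with_joins o) a b c : cle o a b -> cle o (cadd o c a) (cadd o c b).
Proof. intro H. apply (cle_add o HJ); auto. apply (cle_refl o HJ). Qed.
Lemma add_swap {W} (o : cone_ops W) (HJ : is_cone_with_joins o) a b c : cadd o a (cadd o b c) = cadd o b (cadd o a c).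
Proof. rewrite !(addA o HJ). f_equal. apply (addC o HJ). Qed.

Lemma add_inf_glb {W} (o : cone_ops W) (HJ : is_cone_with_joins o) A i v u :
  is_inf o A i -> (forall a, A a -> cle o u (cadd o v a)) -> cle o u (cadd o v i).
Proof. intros Hi H. destruct (dist o HJ v A i Hi) as [_ G]. apply G.
  intros x [a [Ha ->]]. auto. Qed.

Lemma smul_mono {W} (o : cone_ops W) (HJ : is_cone_with_joins o) l a b : 0 <= l -> cle o a b -> cle o (csmul o l a) (csmul o l b).
Proof. intros Hl [z <-]. exists (csmul o l z). symmetry. apply (smulDr o HJ); auto. Qed.
Lemma smul_le {W} (o : cone_ops W) (HJ : is_cone_with_joins o) l m v : 0 <= l <= m -> cle o (csmul o l v) (csmul o m v).
Proof. intros H. exists (csmul o (m - l) v). rewrite <- (smulDl o HJ) by lra. f_equal. lra. Qed.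

Lemma eps_le {W} (o : cone_ops W) (HJ : is_cone_with_joins o) l v : 0 < l -> cle o (ceps o v) (csmul o l v).
Proof. intro Hl. destruct (cinf_spec o HJ (fun u => exists l, 0 < l /\ u = csmul o l v)) as [H _].
  apply H. eauto. Qed.
Lemma eps_glb {W} (o : cone_ops W) (HJ : is_cone_with_joins o) u v :
  (forall l, 0 < l -> cle o u (csmul o l v)) -> cle o u (ceps o v).
Proof. intro H. destruct (cinf_spec o HJ (fun u => exists l, 0 < l /\ u = csmul o l v)) as [_ G].
  apply G. intros a [l [Hl ->]]. auto. Qed.
Lemma add_eps_glb {W} (o : cone_ops W) (HJ : is_cone_with_joins o) u v w :
  (forall l, 0 < l -> cle o u (cadd o w (csmul o l v))) -> cle o u (cadd o w (ceps o v)).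
Proof. intro H. apply (add_inf_glb o HJ (fun u => exists l, 0 < l /\ u = csmul o l v)).
  apply cinf_spec; auto. intros a [l [Hl ->]]. auto. Qed.

Lemma eps_self {W} (o : cone_ops W) (HJ : is_cone_with_joins o) v : cadd o v (ceps o v) = v.
Proof. apply (anti o HJ); [| apply cle_addr; auto].
  set (p := cadd o v (ceps o v)).
  assert (Hp : forall m, 1 < m -> cle o p (csmul o m v)).
  { intros m Hm. replace m with (1 + (m - 1)) by lra. rewrite (smulDl o HJ) by lra.
    rewrite (smul1 o HJ). apply cle_addL; auto. apply eps_le; auto; lra. }
  destruct (wedge o HJ p) as [_ G]. apply G.
  intros a [e [He ->]]. destruct (Req_dec e 0) as [->|Hne].
  - rewrite (smul0 o HJ). apply cle_0; auto.
  - apply (cle_trans o HJ _ (csmul o e (csmul o (/ e) v))).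
    + apply smul_mono; auto; try lra. apply Hp.
      rewrite <- Rinv_1. apply Rinv_lt_contravar; lra.
    + rewrite (smulA o HJ) by (try lra; left; apply Rinv_0_lt_compat; lra).
      rewrite Rinv_r by lra. rewrite (smul1 o HJ). apply cle_refl; auto.
Qed.

Lemma eps_idem {W} (o : cone_ops W) (HJ : is_cone_with_joins o) v : cadd o (ceps o v) (ceps o v) = ceps o v.
Proof. apply (anti o HJ); [| apply cle_addr; auto].
  apply eps_glb; auto. intros l Hl. replace l with (l/2 + l/2) by lra.
  rewrite (smulDl o HJ) by lra. apply cle_add; auto; apply eps_le; auto; lra. Qed.

Lemma eps_mono {W} (o : cone_ops W) (HJ : is_cone_with_joins o) a b : cle o a b -> cle o (ceps o a) (ceps o b).
Proof. intro H. apply eps_glb; auto. intros l Hl. eapply (cle_trans o HJ). apply (eps_le o HJ l a Hl).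
  apply smul_mono; auto; lra. Qed.

Lemma eps_add {W} (o : cone_ops W) (HJ : is_cone_with_joins o) a b :
  cle o (ceps o (cadd o a b)) (cadd o (ceps o a) (ceps o b)).
Proof. apply add_eps_glb; auto. intros l Hl.
  rewrite (addC o HJ (ceps o a)). apply add_eps_glb; auto. intros m Hm.
  destruct (Rle_dec l m).
  - eapply (cle_trans o HJ). apply (eps_le o HJ l); auto.
    rewrite (smulDr o HJ) by lra. rewrite (addC o HJ (csmul o l a)).
    apply cle_add; auto. apply cle_refl; auto. apply smul_le; auto; lra.
  - eapply (cle_trans o HJ). apply (eps_le o HJ m); auto.
    rewrite (smulDr o HJ) by lra. rewrite (addC o HJ (csmul o m a)).
    apply cle_add; auto. apply smul_le; auto; lra. apply cle_refl; auto.
Qed.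

Lemma cancel_n {W} (o : cone_ops W) (HJ : is_cone_with_joins o) u a b : cle o (cadd o u a) (cadd o u b) ->
  forall n, cle o (cadd o u (csmul o (INR n) a)) (cadd o u (csmul o (INR n) b)).
Proof. intros H n. induction n.
  - simpl. rewrite !(smul0 o HJ). apply cle_refl; auto.
  - rewrite S_INR, !(smulDl o HJ) by (try lra; apply pos_INR). rewrite !(smul1 o HJ).
    rewrite !(addA o HJ). eapply (cle_trans o HJ). apply cle_addR; auto. apply IHn.
    rewrite <- (addA o HJ u (csmul o (INR n) b) b), (addC o HJ (csmul o (INR n) b) b), (addA o HJ).
    rewrite <- (addA o HJ u (csmul o (INR n) b) a), (addC o HJ (csmul o (INR n) b) a), (addA o HJ u a).
    apply cle_addR; auto.
Qed.

Lemma cancel {W} (o : cone_ops W) (HJ : is_cone_with_joins o) u a b : cle o (cadd o u a) (cadd o u b) ->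
  cle o a (cadd o b (ceps o u)).
Proof. intro H. apply add_eps_glb; auto. intros l Hl.
  destruct (archimed_cor1 l Hl) as [N [HN HN0]].
  assert (HNp : 0 < INR N) by (apply lt_0_INR; auto).
  assert (Hi : 0 < / INR N) by (apply Rinv_0_lt_compat; auto).
  pose proof (smul_mono o HJ (/ INR N) _ _ ltac:(lra) (cancel_n o HJ u a b H N)) as K.
  rewrite !(smulDr o HJ), !(smulA o HJ) in K by (try lra; apply pos_INR).
  rewrite Rinv_l in K by lra. rewrite !(smul1 o HJ) in K.
  eapply (cle_trans o HJ). apply (cle_addl o HJ a (csmul o (/ INR N) u)).
  eapply (cle_trans o HJ). apply K. rewrite (addC o HJ). apply cle_addL; auto.
  apply smul_le; auto; lra.
Qed.

Lemma cancel_eq {W} (o : cone_ops W) (HJ : is_cone_with_joins o) u a b : cadd o u a = cadd o u b ->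
  cadd o a (ceps o u) = cadd o b (ceps o u).
Proof. intro H. apply (anti o HJ).
  - eapply (cle_trans o HJ). apply cle_addR; auto. apply (cancel o HJ u a b). rewrite H; apply cle_refl; auto.
    rewrite <- (addA o HJ), (eps_idem o HJ). apply cle_refl; auto.
  - eapply (cle_trans o HJ). apply cle_addR; auto. apply (cancel o HJ u b a). rewrite H; apply cle_refl; auto.
    rewrite <- (addA o HJ), (eps_idem o HJ). apply cle_refl; auto.
Qed.

Lemma meet_l {W} (o : cone_ops W) (HJ : is_cone_with_joins o) x y : cle o (cmeet o x y) x.
Proof. destruct (cinf_spec o HJ (fun u => u = x \/ u = y)) as [H _]. apply H; auto. Qed.
Lemma meet_r {W} (o : cone_ops W) (HJ : is_cone_with_joins o) x y : cle o (cmeet o x y) y.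
Proof. destruct (cinf_spec o HJ (fun u => u = x \/ u = y)) as [H _]. apply H; auto. Qed.
Lemma meet_glb {W} (o : cone_ops W) (HJ : is_cone_with_joins o) x y u : cle o u x -> cle o u y -> cle o u (cmeet o x y).
Proof. intros. destruct (cinf_spec o HJ (fun u => u = x \/ u = y)) as [_ G]. apply G.
  intros a [->| ->]; auto. Qed.
Lemma join_l {W} (o : cone_ops W) (HJ : is_cone_with_joins o) x y : cle o x (cjoin o x y).
Proof. destruct (csup_spec o HJ (fun u => u = x \/ u = y)) as [H _]. apply H; auto. Qed.
Lemma join_r {W} (o : cone_ops W) (HJ : is_cone_with_joins o) x y : cle o y (cjoin o x y).
Proof. destruct (csup_spec o HJ (fun u => u = x \/ u = y)) as [H _]. apply H; auto. Qed.
Lemma join_lub {W} (o : cone_ops W) (HJ : is_cone_with_joins o) x y u : cle o x u -> cle o y u -> cle o (cjoin o x y) u.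
Proof. intros. destruct (csup_spec o HJ (fun u => u = x \/ u = y)) as [_ G]. apply G.
  intros a [->| ->]; auto. Qed.
Lemma meetC {W} (o : cone_ops W) (HJ : is_cone_with_joins o) x y : cmeet o x y = cmeet o y x.
Proof. apply (anti o HJ); apply meet_glb; auto; (apply meet_l || apply meet_r); auto. Qed.
Lemma joinC {W} (o : cone_ops W) (HJ : is_cone_with_joins o) x y : cjoin o x y = cjoin o y x.
Proof. apply (anti o HJ); apply join_lub; auto; (apply join_l || apply join_r); auto. Qed.
Lemma supf_ub {W} (o : cone_ops W) (HJ : is_cone_with_joins o) {I} (x : I -> W) i : cle o (x i) (csupf o x).
Proof. destruct (csup_spec o HJ (fun u => exists i, u = x i)) as [H _]. apply H; eauto. Qed.
Lemma supf_lub {W} (o : cone_ops W) (HJ : is_cone_with_joins o) {I} (x : I -> W) u :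
  (forall i, cle o (x i) u) -> cle o (csupf o x) u.
Proof. intro. destruct (csup_spec o HJ (fun u => exists i, u = x i)) as [_ G]. apply G.
  intros a [i ->]; auto. Qed.

Lemma sup_add {W} (o : cone_ops W) (HJ : is_cone_with_joins o) A s u U :
  (exists a, A a) -> is_sup o A s -> (forall a, A a -> cle o (cadd o u a) U) -> cle o (cadd o u s) U.
Proof. intros [a0 Ha0] [_ Hs] H.
  assert (HuU : cle o u U) by (eapply (cle_trans o HJ); [apply cle_addr; auto | apply H; eauto]).
  destruct HuU as [d Hd].
  assert (Hsd : cle o s (cadd o d (ceps o u))).
  { apply Hs. intros a Ha. apply cancel; auto. rewrite Hd. auto. }
  eapply (cle_trans o HJ). apply cle_addL; auto. apply Hsd.
  rewrite (addA o HJ), Hd. rewrite <- (eps_self o HJ U) at 2. apply cle_addL; auto.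
  apply eps_mono; auto. exists d; auto.
Qed.

Lemma lemP {W} (o : cone_ops W) (HJ : is_cone_with_joins o) v1 v2 w1 w2 :
  cadd o v1 v2 = cadd o w1 w2 -> cadd o w1 (cmeet o v2 w2) = cadd o (cmeet o v1 w1) v2.
Proof. intro E. apply (anti o HJ).
  - rewrite (addC o HJ _ v2). apply (add_inf_glb o HJ (fun u => u = v1 \/ u = w1)). apply cinf_spec; auto.
    intros a [->| ->].
    + rewrite (addC o HJ v2), E. apply cle_addL; auto. apply meet_r; auto.
    + rewrite (addC o HJ v2). apply cle_addL; auto. apply meet_l; auto.
  - apply (add_inf_glb o HJ (fun u => u = v2 \/ u = w2)). apply cinf_spec; auto.
    intros a [->| ->].
    + apply cle_addR; auto. apply meet_r; auto.
    + rewrite <- E. apply cle_addR; auto. apply meet_l; auto.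
Qed.

Lemma absorb {W} (o : cone_ops W) (HJ : is_cone_with_joins o) a e :
  cadd o e e = e -> cle o a e -> cadd o a e = e.
Proof. intros He Ha. apply (anti o HJ). rewrite <- He at 2. apply cle_addR; auto. apply cle_addl; auto. Qed.

Lemma add4 {W} (o : cone_ops W) (HJ : is_cone_with_joins o) a b c d :
  cadd o (cadd o a b) (cadd o c d) = cadd o (cadd o a c) (cadd o b d).
Proof. rewrite <- !(addA o HJ). f_equal. apply (add_swap o HJ). Qed.

Lemma lemQ {W} (o : cone_ops W) (HJ : is_cone_with_joins o) v1 v2 w1 w2 :
  cadd o v1 v2 = cadd o w1 w2 -> cadd o v1 (cmeet o v2 w2) = cadd o (cmeet o v1 w1) w2.
Proof. intro E. rewrite (meetC o HJ v2), (meetC o HJ v1). apply lemP; auto. Qed.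

Lemma lemD2 {W} (o : cone_ops W) (HJ : is_cone_with_joins o) v a b :
  cle o (ceps o a) (cadd o (ceps o b) (ceps o v)) ->
  cadd o v (cadd o (ceps o b) (ceps o a)) = cadd o v (ceps o b).
Proof. intro H. apply (anti o HJ).
  - eapply (cle_trans o HJ). apply cle_addL; auto. apply cle_addL; auto. apply H.
    rewrite (addA o HJ (ceps o b)), (eps_idem o HJ), (addC o HJ (ceps o b)), (addA o HJ), (eps_self o HJ).
    apply cle_refl; auto.
  - apply cle_addL; auto. apply cle_addr; auto.
Qed.

Lemma partA {W} (o : cone_ops W) (HJ : is_cone_with_joins o) x y z :
  cle o (cmeet o (cadd o x y) z) (cadd o (cmeet o x z) (cmeet o y z)).
Proof. apply (add_inf_glb o HJ (fun u => u = y \/ u = z)). apply cinf_spec; auto.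
  intros a Ha. rewrite (addC o HJ (cmeet o x z)).
  apply (add_inf_glb o HJ (fun u => u = x \/ u = z)). apply cinf_spec; auto.
  intros b Hb. destruct Ha as [->| ->]; destruct Hb as [->| ->].
  - rewrite (addC o HJ). apply meet_l; auto.
  - eapply (cle_trans o HJ). apply meet_r; auto. apply cle_addl; auto.
  - eapply (cle_trans o HJ). apply meet_r; auto. apply cle_addr; auto.
  - eapply (cle_trans o HJ). apply meet_r; auto. apply cle_addr; auto.
Qed.

Lemma partB1 {W} (o : cone_ops W) (HJ : is_cone_with_joins o) x y z w :
  cadd o x y = cadd o z w -> cadd o x y = cadd o (cjoin o x z) (cmeet o y w).
Proof. intro E. apply (anti o HJ).
  - apply (add_inf_glb o HJ (fun u => u = y \/ u = w)). apply cinf_spec; auto.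
    intros a [->| ->].
    + apply cle_addR; auto. apply join_l; auto.
    + rewrite E. apply cle_addR; auto. apply join_r; auto.
  - rewrite (addC o HJ (cjoin o x z)).
    apply (sup_add o HJ (fun u => u = x \/ u = z)). exists x; auto. apply csup_spec; auto.
    intros a [->| ->].
    + rewrite (addC o HJ x y). apply cle_addR; auto. apply meet_l; auto.
    + rewrite E, (addC o HJ z w). apply cle_addR; auto. apply meet_r; auto.
Qed.

Lemma partB2 {W} (o : cone_ops W) (HJ : is_cone_with_joins o) x y :
  cadd o x y = cadd o (cjoin o x y) (cmeet o x y).
Proof. rewrite (meetC o HJ). apply partB1; auto. apply (addC o HJ). Qed.

Lemma partC {W} (o : cone_ops W) (HJ : is_cone_with_joins o) (I : Type) (x : I -> W) (y : W) :
     cle o (csupf o (fun i => cmeet o (x i) y)) (cmeet o (csupf o x) y) /\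
     cle o (cmeet o (csupf o x) y)
           (cadd o (csupf o (fun i => cmeet o (x i) y))
                   (ceps o (cjoin o y (csupf o x)))).
Proof. split.
  - apply supf_lub; auto. intro i. apply meet_glb; auto.
    eapply (cle_trans o HJ). apply meet_l; auto. apply supf_ub; auto. apply meet_r; auto.
  - destruct (classic (inhabited I)) as [[i0]|Hn].
    + set (X := csupf o x). set (S := csupf o (fun i => cmeet o (x i) y)).
      assert (H2 : cle o (cadd o y X) (cadd o (cjoin o X y) S)).
      { apply (sup_add o HJ (fun u => exists i, u = x i)). exists (x i0), i0; auto.
        apply csup_spec; auto. intros a [i ->]. rewrite (addC o HJ), (partB2 o HJ).
        apply cle_add; auto.
        - apply join_lub; auto. eapply (cle_trans o HJ). apply supf_ub; auto. apply join_l; auto.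
          apply join_r; auto.
        - apply (supf_ub o HJ (fun i => cmeet o (x i) y)). }
      rewrite (addC o HJ), (partB2 o HJ) in H2. rewrite (joinC o HJ). apply cancel; auto.
    + apply (cle_trans o HJ _ (czero o)); [| apply cle_0; auto].
      eapply (cle_trans o HJ). apply meet_l; auto.
      apply supf_lub; auto. intro i. exfalso. apply Hn. constructor; auto.
Qed.

Lemma partD {W} (o : cone_ops W) (HJ : is_cone_with_joins o) v1 v2 w1 w2 :
  cadd o v1 v2 = cadd o w1 w2 ->
     exists z11 z12 z21 z22 : W,
       cadd o z11 z12 = v1 /\
       cadd o z21 z22 = cadd o v2 (ceps o v1) /\
       cadd o z11 z21 = w1 /\
       cadd o z12 z22 = cadd o w2 (ceps o w1).
Proof. intro E.
  set (z11 := cmeet o v1 w1). set (M := cmeet o v2 w2).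
  set (EE := cadd o (ceps o v1) (ceps o w1)).
  destruct (meet_l o HJ v1 w1) as [z12 H12]. destruct (meet_r o HJ v1 w1) as [z21 H21].
  fold z11 in H12, H21.
  assert (Eid : cadd o EE EE = EE).
  { unfold EE. rewrite (add4 o HJ), !(eps_idem o HJ). reflexivity. }
  assert (Hz : cle o (ceps o z11) EE).
  { eapply (cle_trans o HJ). apply eps_mono; auto. apply meet_l; auto. apply cle_addr; auto. }
  assert (Hz' : cle o (ceps o z11) EE).
  { eapply (cle_trans o HJ). apply eps_mono; auto. apply meet_r; auto. apply cle_addl; auto. }
  exists z11, z12, z21, (cadd o M EE).
  split; [exact H12|]. split; [|split; [exact H21|]].
  - assert (K : cadd o (cadd o z21 M) (ceps o z11) = cadd o v2 (ceps o z11)).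
    { apply cancel_eq; auto. rewrite (addA o HJ), H21. apply lemP; auto. }
    rewrite (addA o HJ). rewrite <- (absorb o HJ (ceps o z11) EE) by auto.
    rewrite (addA o HJ (cadd o z21 M)), K, <- (addA o HJ), (absorb o HJ (ceps o z11) EE) by auto.
    unfold EE. apply lemD2; auto.
    apply (cle_trans o HJ _ (ceps o (cadd o v1 v2))). apply eps_mono; auto. rewrite E. apply cle_addr; auto.
    apply eps_add; auto.
  - assert (K : cadd o (cadd o z12 M) (ceps o z11) = cadd o w2 (ceps o z11)).
    { apply cancel_eq; auto. rewrite (addA o HJ), H12. apply lemQ; auto. }
    rewrite (addA o HJ). rewrite <- (absorb o HJ (ceps o z11) EE) by auto.
    rewrite (addA o HJ (cadd o z12 M)), K, <- (addA o HJ), (absorb o HJ (ceps o z11) EE) by auto.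
    unfold EE. rewrite (addC o HJ (ceps o v1)). apply lemD2; auto.
    apply (cle_trans o HJ _ (ceps o (cadd o w1 w2))). apply eps_mono; auto. rewrite <- E. apply cle_addr; auto.
    apply eps_add; auto.
Qed.

Lemma partE {W} (o : cone_ops W) (HJ : is_cone_with_joins o) v1 v2 w1 w2 :
  cadd o v1 v2 = cadd o w1 w2 ->
     exists z11 z12 z21 z22 : W,
       cadd o z11 z12 = v1 /\
       cadd o z21 z22 = v2 /\
       cle o w1 (cadd o (cadd o z11 z21) (ceps o w2)) /\
       cle o w2 (cadd o (cadd o z12 z22) (ceps o w1)).
Proof. intro E.
  set (z11 := cmeet o v1 w1). set (M := cmeet o v2 w2).
  destruct (meet_l o HJ v1 w1) as [z12 H12]. destruct (meet_l o HJ v2 w2) as [z21 H21].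
  fold z11 in H12. fold M in H21.
  pose proof (lemP o HJ v1 v2 w1 w2 E) as LP. pose proof (lemQ o HJ v1 v2 w1 w2 E) as LQ.
  fold z11 M in LP, LQ.
  exists z11, z12, z21, M.
  split; [exact H12|]. split; [rewrite (addC o HJ); exact H21|]. split.
  - eapply (cle_trans o HJ). apply (cancel o HJ M w1 (cadd o z11 z21)).
    rewrite (add_swap o HJ M z11 z21), H21, (addC o HJ M w1), LP. apply cle_refl; auto.
    apply cle_addL; auto. apply eps_mono; auto. apply meet_r; auto.
  - eapply (cle_trans o HJ). apply (cancel o HJ z11 w2 (cadd o z12 M)).
    rewrite (addA o HJ z11 z12 M), H12, LQ. apply cle_refl; auto.
    apply cle_addL; auto. apply eps_mono; auto. apply meet_r; auto.
Qed.

Theorem mainTheorem10 (W : Type) (o : cone_ops W) (HJ : is_cone_with_joins o) :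
  (* (a) *)
  (forall x y z : W,
     cle o (cmeet o (cadd o x y) z) (cadd o (cmeet o x z) (cmeet o y z))) /\
  (* (b) *)
  (forall x y z w : W, cadd o x y = cadd o z w ->
     cadd o x y = cadd o (cjoin o x z) (cmeet o y w)) /\
  (forall x y : W, cadd o x y = cadd o (cjoin o x y) (cmeet o x y)) /\
  (* (c) *)
  (forall (I : Type) (x : I -> W) (y : W),
     cle o (csupf o (fun i => cmeet o (x i) y)) (cmeet o (csupf o x) y) /\
     cle o (cmeet o (csupf o x) y)
           (cadd o (csupf o (fun i => cmeet o (x i) y))
                   (ceps o (cjoin o y (csupf o x))))) /\
  (* (d) *)
  (forall v1 v2 w1 w2 : W, cadd o v1 v2 = cadd o w1 w2 ->
     exists z11 z12 z21 z22 : W,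
       cadd o z11 z12 = v1 /\
       cadd o z21 z22 = cadd o v2 (ceps o v1) /\
       cadd o z11 z21 = w1 /\
       cadd o z12 z22 = cadd o w2 (ceps o w1)) /\
  (* (e) *)
  (forall v1 v2 w1 w2 : W, cadd o v1 v2 = cadd o w1 w2 ->
     exists z11 z12 z21 z22 : W,
       cadd o z11 z12 = v1 /\
       cadd o z21 z22 = v2 /\
       cle o w1 (cadd o (cadd o z11 z21) (ceps o w2)) /\
       cle o w2 (cadd o (cadd o z12 z22) (ceps o w1))).
Proof.
  split. intros; apply partA; auto.
  split. intros; apply partB1; auto.
  split. intros; apply partB2; auto.
  split. intros; apply partC; auto.
  split. intros; apply partD; auto.
  intros; apply partE; auto.
Qed.
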